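(* Let $n\in\mathbb{N}$. For each $k\in\mathbb{N}$ let $X_k = \{\alpha\in\mathcal{O}\,|\,N(\alpha) = k\}$, $t_k = |X_k/\mathcal{O}^{\times}|$ and $x_{1,k}, \dots, x_{t_k,k}$ be a set of representatives for $X_k/\mathcal{O}^{\times}$ (under right multiplication by units). For such $k$ define \[R_{k} := \left\{\begin{pmatrix}x_{i,k} & v\\ w & x_{j,k}\end{pmatrix}\,:\,1\leq i,j\leq t_k,\ v,w\in X_{n-k},\ x_{i,k}\overline{w} + v\overline{x_{j,k}} = 0\right\}.\] Then the following matrices are representatives for $(\text{GU}_2(D)_n\cap M_2(\mathcal{O})^{\times})/ \Gamma^{(1)}$ (cosets under right multiplication by $\Gamma^{(1)}$): $\bigcup_{k=m+1}^n R_k$ if $n=2m+1$ is odd, and $\left(\bigcup_{k=m+1}^n R_k\right)\cup R_{m}'$ if $n=2m$ is even. Here $R_m'\subset R_m$ is the finite subset obtained as follows: each matrix $\begin{pmatrix}x_{i,m} & v\\ w & x_{j,m}\end{pmatrix}\in R_m$ is equivalent under right multiplication by an antidiagonal element of $\Gamma^{(1)}$ to at most one other matrix of $R_m$, namely $\begin{pmatrix}x_{s,m} & \frac{x_{i,m}\overline{w}x_{t,m}}{m}\\ \frac{x_{j,m}\overline{v}x_{s,m}}{m} & x_{t,m}\end{pmatrix}$ where $v\sim x_{s,m}$ and $w\sim x_{t,m}$ under right unit multiplication; $R_m'$ consists of one chosen matrix from each such equivalence pair.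
   Context: $D$ is a definite quaternion algebra over $\mathbb{Q}$ ramified exactly at $\{p,\infty\}$ for a prime $p$, with standard involution $x\mapsto\overline{x}$ and reduced norm $N$; $\mathcal{O}$ is a fixed maximal order with (finite) unit group $\mathcal{O}^\times$. $\text{GU}_2(D) = \{g\in M_2(D)\,|\,g\overline{g}^T = \mu(g)I,\ \mu(g)\in\mathbb{Q}^\times\}$, and $\text{GU}_2(D)_n$ denotes its elements of similitude $\mu(g)=n$. $M_2(\mathcal{O})^\times = \text{GL}_2(D)\cap M_2(\mathcal{O})$. $\Gamma^{(1)} = \text{GU}_2(\mathcal{O})$ is the finite group of matrices $\begin{pmatrix}\alpha&0\\0&\beta\end{pmatrix}$ and $\begin{pmatrix}0&\alpha\\ \beta&0\end{pmatrix}$ with $\alpha,\beta\in\mathcal{O}^\times$. In the paper this is applied (for $p\in\{2,3\}$, $n=q$ a prime $\neq p$) to obtain Hecke representatives for the operator $T_{u,q}$. *)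

(* Defs.v *)
From HB Require Import structures.
From mathcomp Require Import all_boot all_order all_algebra.
From mathcomp Require Import ring.
Set Implicit Arguments. Unset Strict Implicit. Unset Printing Implicit Defensive.
Import Order.TTheory GRing.Theory Num.Theory.
Local Open Scope ring_scope.

(* The quaternion algebra D = (a,b)_Q over Q, a b nonzero integers:     *)
(* basis 1, i, j, k = ij with i^2 = a, j^2 = b, ij = - ji.             *)
(* An element (x0,x1,x2,x3) stands for x0 + x1 i + x2 j + x3 k.        *)
Definition quat (a b : int) : Type := (rat * rat * rat * rat)%type.

Section Quat.
Variables (a b : int).

Local Notation quat := (quat a b).
HB.instance Definition _ := GRing.Zmodule.on quat.

Local Notation A := (a%:~R : rat).
Local Notation B := (b%:~R : rat).

Definition qmk (x0 x1 x2 x3 : rat) : quat := (x0, x1, x2, x3).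

Definition qone : quat := qmk 1 0 0 0.

Definition qmul (x y : quat) : quat :=
  let: (x0, x1, x2, x3) := x in
  let: (y0, y1, y2, y3) := y in
  qmk (x0 * y0 + A * x1 * y1 + B * x2 * y2 - A * B * x3 * y3)
      (x0 * y1 + x1 * y0 - B * x2 * y3 + B * x3 * y2)
      (x0 * y2 + x2 * y0 + A * x1 * y3 - A * x3 * y1)
      (x0 * y3 + x3 * y0 + x1 * y2 - x2 * y1).

Lemma qaddE (x0 x1 x2 x3 y0 y1 y2 y3 : rat) :
  (qmk x0 x1 x2 x3 : quat) + qmk y0 y1 y2 y3 =
  qmk (x0 + y0) (x1 + y1) (x2 + y2) (x3 + y3).
Proof. by []. Qed.

Lemma qmulA : associative qmul.
Proof.
move=> [[[x0 x1] x2] x3] [[[y0 y1] y2] y3] [[[z0 z1] z2] z3] /=.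
rewrite /qmk; congr (_, _, _, _); ring.
Qed.

Lemma qmul1 : left_id qone qmul.
Proof.
move=> [[[x0 x1] x2] x3] /=; rewrite /qmk; congr (_, _, _, _); ring.
Qed.

Lemma qmulr1 : right_id qone qmul.
Proof.
move=> [[[x0 x1] x2] x3] /=; rewrite /qmk; congr (_, _, _, _); ring.
Qed.

Lemma qmulDl : left_distributive qmul +%R.
Proof.
move=> [[[x0 x1] x2] x3] [[[y0 y1] y2] y3] [[[z0 z1] z2] z3].
rewrite /= !qaddE /qmk; congr (_, _, _, _); ring.
Qed.

Lemma qmulDr : right_distributive qmul +%R.
Proof.
move=> [[[x0 x1] x2] x3] [[[y0 y1] y2] y3] [[[z0 z1] z2] z3].
rewrite /= !qaddE /qmk; congr (_, _, _, _); ring.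
Qed.

Lemma qone_neq0 : qone != 0.
Proof. by []. Qed.

HB.instance Definition _ :=
  GRing.Zmodule_isNzRing.Build quat qmulA qmul1 qmulr1 qmulDl qmulDr qone_neq0.

Definition qc (r : rat) : quat := qmk r 0 0 0.

Definition qconj (x : quat) : quat :=
  let: (x0, x1, x2, x3) := x in qmk x0 (- x1) (- x2) (- x3).

Definition nrd (x : quat) : rat :=
  let: (x0, x1, x2, x3) := x in
  x0 ^+ 2 - A * x1 ^+ 2 - B * x2 ^+ 2 + A * B * x3 ^+ 2.

Definition is_order (O : quat -> Prop) : Prop :=
  exists e : 'I_4 -> quat,
    [/\ (forall r : 'I_4 -> rat, \sum_i qc (r i) * e i = 0 -> forall i, r i = 0),
        (forall x, O x <-> exists c : 'I_4 -> int, x = \sum_i (e i) *~ (c i)),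
        O 1 &
        (forall x y, O x -> O y -> O (x * y))].

Definition is_maximal_order (O : quat -> Prop) : Prop :=
  is_order O /\
  forall O' : quat -> Prop, is_order O' -> (forall x, O x -> O' x) ->
    forall x, O' x -> O x.

Definition unitO (O : quat -> Prop) (u : quat) : Prop :=
  O u /\ exists v, [/\ O v, u * v = 1 & v * u = 1].

Definition Xk (O : quat -> Prop) (k : nat) (x : quat) : Prop :=
  O x /\ nrd x = k%:R.

Definition reps_of (O : quat -> Prop) (X : quat -> Prop) (s : seq quat) : Prop :=
  [/\ (forall i, (i < size s)%N -> X (nth 0 s i)),
      (forall x, X x -> exists i u, [/\ (i < size s)%N, unitO O u & x = nth 0 s i * u]) &
      (forall i j u, (i < size s)%N -> (j < size s)%N -> unitO O u ->
          nth 0 s i = nth 0 s j * u -> i = j)].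

Definition mx2 (x y z w : quat) : 'M[quat]_2 :=
  \matrix_(i < 2, j < 2)
    if (i == 0 :> nat) then (if (j == 0 :> nat) then x else y)
    else (if (j == 0 :> nat) then z else w).

Definition conjT (g : 'M[quat]_2) : 'M[quat]_2 := \matrix_(i, j) qconj (g j i).

Definition GU2n (n : nat) (g : 'M[quat]_2) : Prop :=
  g *m conjT g = (qc n%:R)%:M.

(* M_2(O)^x = GL_2(D) \cap M_2(O) *)
Definition inM2O (O : quat -> Prop) (g : 'M[quat]_2) : Prop :=
  forall i j, O (g i j).
Definition invertible2 (g : 'M[quat]_2) : Prop :=
  exists h : 'M[quat]_2, g *m h = 1%:M /\ h *m g = 1%:M.
Definition M2O_units (O : quat -> Prop) (g : 'M[quat]_2) : Prop :=
  inM2O O g /\ invertible2 g.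

(* Gamma^(1) = GU_2(O): diagonal and antidiagonal matrices with unit entries *)
Definition Gamma1_antidiag (O : quat -> Prop) (g : 'M[quat]_2) : Prop :=
  exists al be, [/\ unitO O al, unitO O be & g = mx2 0 al be 0].
Definition Gamma1 (O : quat -> Prop) (g : 'M[quat]_2) : Prop :=
  (exists al be, [/\ unitO O al, unitO O be & g = mx2 al 0 0 be])
  \/ Gamma1_antidiag O g.

Definition coset_reps (G H S : 'M[quat]_2 -> Prop) : Prop :=
  [/\ (forall s, S s -> G s),
      (forall g, G g -> exists s h, [/\ S s, H h & g = s *m h]) &
      (forall s s' h, S s -> S s' -> H h -> s' = s *m h -> s = s')].

Definition xr (xs : nat -> seq quat) (k i : nat) : quat := nth 0 (xs k) i.

Definition Rk (O : quat -> Prop) (xs : nat -> seq quat) (n k : nat)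
    (g : 'M[quat]_2) : Prop :=
  exists i j v w,
    [/\ (i < size (xs k))%N /\ (j < size (xs k))%N,
        Xk O (n - k) v, Xk O (n - k) w,
        xr xs k i * qconj w + v * qconj (xr xs k j) = 0 &
        g = mx2 (xr xs k i) v w (xr xs k j)].

End Quat.

(* Hilbert symbol (a,b)_l for nonzero integers a, b and a prime l,     *)
(* by the explicit formulas (Serre, A Course in Arithmetic, III.1.2). *)
Definition legendre (u : int) (l : nat) : int :=
  if (l%:Z %| u)%Z then 0
  else if has (fun x : nat => (l%:Z %| (x%:Z) ^+ 2 - u)%Z) (iota 0 l) then 1 else -1.

Definition hilbert (a b : int) (l : nat) : int :=
  let al := logn l `|a|%N in
  let be := logn l `|b|%N in
  let u := (a %/ (l ^ al)%:Z)%Z in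
  let v := (b %/ (l ^ be)%:Z)%Z in
  if l == 2%N then
    let eps (t : int) := (t %% 4)%Z == 3 in
    let ome (t : int) := ((t %% 8)%Z == 3) || ((t %% 8)%Z == 5) in
    (-1) ^+ (nat_of_bool (eps u && eps v) + nat_of_bool (odd al && ome v)
             + nat_of_bool (odd be && ome u))
  else
    (-1) ^+ (al * be * (l.-1)./2) * legendre u l ^+ be * legendre v l ^+ al.

(* (a,b)_Q is a definite quaternion algebra ramified exactly at {p, oo}:
   ramified at oo (a < 0, b < 0) and, for primes l, ramified at l iff l = p. *)
Definition ramified_exactly_at_p_infty (a b : int) (p : nat) : Prop :=
  [/\ a < 0, b < 0 &
      forall l : nat, prime l -> (hilbert a b l = -1 <-> l = p)].

(* Main.v *)
Require Import Defs.
From mathcomp Require Import all_boot all_order all_algebra.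
From mathcomp Require Import ring lra zify.
Import Order.TTheory GRing.Theory Num.Theory.
Set Implicit Arguments. Unset Strict Implicit. Unset Printing Implicit Defensive.
Local Open Scope ring_scope.

Ltac qd x := let x0 := fresh "x" in let x1 := fresh "x" in let x2 := fresh "x" in
  let x3 := fresh "x" in case: x => [[[x0 x1] x2] x3].
Ltac qfin := rewrite /= /qmk; congr (_, _, _, _); ring.

Lemma qmulE (a b : int) (x y : quat a b) : x * y = qmul x y.
Proof. by []. Qed.

Lemma qconjM (a b : int) (x y : quat a b) : qconj (x * y) = qconj y * qconj x.
Proof. rewrite !qmulE; qd x; qd y; qfin. Qed.

Lemma qconjD (a b : int) (x y : quat a b) : qconj (x + y) = qconj x + qconj y.
Proof. qd x; qd y. rewrite /= qaddE /qmk; congr (_,_,_,_); ring. Qed.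

Lemma qconj0 (a b : int) : qconj (0 : quat a b) = 0.
Proof. rewrite /= /qmk; congr (_,_,_,_); ring. Qed.

Lemma qconjK (a b : int) (x : quat a b) : qconj (qconj x) = x.
Proof. qd x; qfin. Qed.

Lemma qcC (a b : int) r (x : quat a b) : qc a b r * x = x * qc a b r.
Proof. rewrite !qmulE; qd x; qfin. Qed.

Lemma qcM (a b : int) r s : qc a b r * qc a b s = qc a b (r * s).
Proof. rewrite qmulE; qfin. Qed.

Lemma qc1 (a b : int) : qc a b 1 = 1.
Proof. by []. Qed.

Lemma qc0 (a b : int) : qc a b 0 = 0.
Proof. by []. Qed.

Lemma qcD (a b : int) r s : qc a b (r + s) = qc a b r + qc a b s.
Proof. rewrite /qc /= /qmk; congr (_,_,_,_); ring. Qed.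

Lemma qconj_qc (a b : int) r : qconj (qc a b r) = qc a b r.
Proof. qfin. Qed.

Lemma mul_qconj (a b : int) (x : quat a b) : x * qconj x = qc a b (nrd x).
Proof. rewrite qmulE; qd x; qfin. Qed.

Lemma qconj_mul (a b : int) (x : quat a b) : qconj x * x = qc a b (nrd x).
Proof. rewrite qmulE; qd x; qfin. Qed.

Lemma nrdM (a b : int) (x y : quat a b) : nrd (x * y) = nrd x * nrd y.
Proof. rewrite qmulE; qd x; qd y; rewrite /=; ring. Qed.

Lemma nrd1 (a b : int) : nrd (1 : quat a b) = 1.
Proof. rewrite /= ; ring. Qed.

Lemma qc_inj (a b : int) r s : qc a b r = qc a b s -> r = s.
Proof. by case. Qed.

Lemma qcV (a b : int) r : r != 0 -> qc a b r^-1 * qc a b r = 1.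
Proof. by move=> h; rewrite qcM mulVf. Qed.

Lemma qcaddlcancel (a b : int) (x y z : quat a b) :
  nrd x != 0 -> x * y = x * z -> y = z.
Proof.
move=> nz e.
have := congr1 (fun t => qc a b (nrd x)^-1 * qconj x * t) e.
by rewrite /= !mulrA -!(mulrA _ (qconj x)) qconj_mul qcV // !mul1r.
Qed.

Lemma nrd_ge0 (a b : int) (x : quat a b) : a < 0 -> b < 0 -> 0 <= nrd x.
Proof.
move=> ha hb; qd x; rewrite /=.
have hA : (a%:~R : rat) < 0 by rewrite ltrz0.
have hB : (b%:~R : rat) < 0 by rewrite ltrz0.
set A := (a%:~R : rat) in hA *; set B := (b%:~R : rat) in hB *.
have h1 : 0 <= (- A) * x1 ^+ 2 by apply: mulr_ge0; [lra | exact: sqr_ge0].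
have h2 : 0 <= (- B) * x2 ^+ 2 by apply: mulr_ge0; [lra | exact: sqr_ge0].
have h3 : 0 <= (A * B) * x3 ^+ 2.
  apply: mulr_ge0; [ | exact: sqr_ge0].
  by rewrite -mulrNN; apply: mulr_ge0; lra.
have h0 : 0 <= x0 ^+ 2 by exact: sqr_ge0.
lra.
Qed.

Lemma mx2E (a b : int) (g : 'M[quat a b]_2) : g = mx2 (g 0 0) (g 0 1) (g 1 0) (g 1 1).
Proof.
apply/matrixP => i j; rewrite !mxE.
case: i => [[|[|//]] Hi]; case: j => [[|[|//]] Hj] /=; congr (g _ _); exact: val_inj.
Qed.

Lemma mx2_inj (a b : int) (x y z w x' y' z' w' : quat a b) :
  mx2 x y z w = mx2 x' y' z' w' -> [/\ x = x', y = y', z = z' & w = w'].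
Proof.
move=> e.
have e00 := congr1 (fun g : 'M_2 => g 0 0) e.
have e01 := congr1 (fun g : 'M_2 => g 0 1) e.
have e10 := congr1 (fun g : 'M_2 => g 1 0) e.
have e11 := congr1 (fun g : 'M_2 => g 1 1) e.
by move: e00 e01 e10 e11; rewrite /= !mxE /=.
Qed.

Lemma mx2_mul (a b : int) (x y z w x' y' z' w' : quat a b) :
  mx2 x y z w *m mx2 x' y' z' w' =
  mx2 (x * x' + y * z') (x * y' + y * w') (z * x' + w * z') (z * y' + w * w').
Proof.
apply/matrixP => i j; rewrite !mxE !big_ord_recl big_ord0 !mxE.
by case: i => [[|[|//]] Hi]; case: j => [[|[|//]] Hj] /=; rewrite addr0.
Qed.

Lemma conjT_mx2 (a b : int) (x y z w : quat a b) :
  conjT (mx2 x y z w) = mx2 (qconj x) (qconj z) (qconj y) (qconj w).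
Proof.
apply/matrixP => i j; rewrite !mxE.
by case: i => [[|[|//]] Hi]; case: j => [[|[|//]] Hj].
Qed.

Lemma scalar_mx2 (a b : int) (c : quat a b) : (c%:M : 'M_2) = mx2 c 0 0 c.
Proof.
apply/matrixP => i j; rewrite !mxE.
by case: i => [[|[|//]] Hi]; case: j => [[|[|//]] Hj].
Qed.

Lemma one_mx2 (a b : int) : (1%:M : 'M[quat a b]_2) = mx2 1 0 0 1.
Proof. exact: scalar_mx2. Qed.


Definition qcomp (a b : int) (j : nat) (y : quat a b) : rat :=
  let: (y0, y1, y2, y3) := y in
  match j with 0 => y0 | 1 => y1 | 2 => y2 | _ => y3 end.

Lemma qcompD (a b : int) j (x y : quat a b) : qcomp j (x + y) = qcomp j x + qcomp j y.
Proof. by qd x; qd y; case: j => [|[|[|j]]]. Qed.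

Lemma qcomp0 (a b : int) j : qcomp j (0 : quat a b) = 0.
Proof. by case: j => [|[|[|j]]]. Qed.

Lemma qcompN (a b : int) j (x : quat a b) : qcomp j (- x) = - qcomp j x.
Proof. by qd x; case: j => [|[|[|j]]]. Qed.

Lemma qcompMn (a b : int) j (x : quat a b) n : qcomp j (x *+ n) = qcomp j x *+ n.
Proof. by elim: n => [|n IH]; rewrite ?mulr0n ?qcomp0 // !mulrS qcompD IH. Qed.

Lemma qcompMz (a b : int) j (x : quat a b) (z : int) : qcomp j (x *~ z) = qcomp j x *~ z.
Proof. by case: z => n; [rewrite -!pmulrn qcompMn | rewrite NegzE !mulrNz qcompN -!pmulrn qcompMn]. Qed.

Lemma qcomp_sum (a b : int) j (F : 'I_4 -> quat a b) :
  qcomp j (\sum_i F i) = \sum_i qcomp j (F i).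
Proof. exact: (big_morph (qcomp j) (qcompD j) (qcomp0 _ _ j)). Qed.

Lemma qcomp_qc (a b : int) (j : 'I_4) r (y : quat a b) : qcomp j (qc a b r * y) = r * qcomp j y.
Proof. qd y; rewrite qmulE; case: j => [[|[|[|[|//]]]] Hj] /=; ring. Qed.

Lemma quat_eq0 (a b : int) (y : quat a b) : (forall j : 'I_4, qcomp j y = 0) -> y = 0.
Proof.
qd y => h.
have h0 := h (@Ordinal 4 0 isT); have h1 := h (@Ordinal 4 1 isT).
have h2 := h (@Ordinal 4 2 isT); have h3 := h (@Ordinal 4 3 isT).
by move: h0 h1 h2 h3 => /= -> -> -> ->.
Qed.

Definition Lf (A B x0 x1 x2 x3 : rat) (i j : nat) : rat :=
  match i, j with
  | 0, 0 => x0 | 0, 1 => x1 | 0, 2 => x2 | 0, _ => x3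
  | 1, 0 => A * x1 | 1, 1 => x0 | 1, 2 => - (A * x3) | 1, _ => - x2
  | 2, 0 => B * x2 | 2, 1 => B * x3 | 2, 2 => x0 | 2, _ => x1
  | _, 0 => - (A * B * x3) | _, 1 => - (B * x2) | _, 2 => A * x1 | _, _ => x0
  end.

Lemma qcomp_mul (a b : int) (x0 x1 x2 x3 : rat) (j : 'I_4) (y : quat a b) :
  qcomp j (qmk a b x0 x1 x2 x3 * y) =
  \sum_(k < 4) qcomp k y * Lf a%:~R b%:~R x0 x1 x2 x3 k j.
Proof.
rewrite !big_ord_recl big_ord0 qmulE; qd y.
case: j => [[|[|[|[|//]]]] Hj] /=; rewrite /bump /=; ring.
Qed.

Lemma det4 A B x0 x1 x2 x3 :
  \det (\matrix_(i < 4, j < 4) Lf A B x0 x1 x2 x3 i j) =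
  (x0 ^+ 2 - A * x1 ^+ 2 - B * x2 ^+ 2 + A * B * x3 ^+ 2) ^+ 2.
Proof.
rewrite (expand_det_row _ 0) !big_ord_recl big_ord0 /cofactor.
rewrite !(expand_det_row _ 0) !big_ord_recl !big_ord0 /cofactor.
rewrite !(expand_det_row _ 0) !big_ord_recl !big_ord0 /cofactor.
rewrite !det_mx11 !mxE /bump /=.
rewrite /bump /= ?addn0 ?add0n ?exprD ?expr1 ?expr0.
ring.
Qed.

Lemma nrd_sq_int (a b : int) (O : quat a b -> Prop) x :
  is_order O -> O x -> exists z : int, nrd x ^+ 2 = z%:~R.
Proof.
case=> e [li lat O1 Omul] Ox.
have Oe i : O (e i).
  apply/lat; exists (fun j => (i == j)%:Z).
  rewrite (bigD1 i) //= eqxx mulr1z big1 ?addr0 // => j /negPf; rewrite eq_sym => ->.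
  by rewrite mulr0z.
have: forall i : 'I_4, exists c : 'I_4 -> int, x * e i = \sum_j e j *~ c j.
  by move=> i; apply/lat; apply: Omul.
case/fin_all_exists => c hc.
pose M := \matrix_(i < 4, j < 4) ((c i j)%:~R : rat).
pose E := \matrix_(i < 4, j < 4) qcomp j (e i).
move: hc; case: x Ox => [[[x0 x1] x2] x3] Ox hc.
pose L := \matrix_(i < 4, j < 4) Lf a%:~R b%:~R x0 x1 x2 x3 i j.
have EL : E *m L = M *m E.
  apply/matrixP => i j; rewrite !mxE.
  transitivity (qcomp j (qmk a b x0 x1 x2 x3 * e i)).
    by rewrite qcomp_mul; apply: eq_bigr => k _; rewrite !mxE.
  rewrite [qmk _ _ _ _ _ _ * _]hc qcomp_sum; apply: eq_bigr => k _.
  by rewrite !mxE qcompMz mulrzl.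
have dE : \det E != 0.
  apply/negP => /det0P [v v0 vE]; apply: (negP v0).
  have h : \sum_i qc a b (v 0 i) * e i = 0.
    apply: quat_eq0 => j; rewrite qcomp_sum.
    transitivity ((v *m E) 0 j); last by rewrite vE mxE.
    by rewrite mxE; apply: eq_bigr => i _; rewrite qcomp_qc !mxE.
  apply/eqP/rowP => k; rewrite mxE; exact: (li _ h k).
have := congr1 determinant EL; rewrite !det_mulmx [X in _ = X]mulrC.
move=> h; have dL := mulfI dE h.
exists (\det (\matrix_(i < 4, j < 4) c i j)).
rewrite -det_map_mx.
have -> : map_mx intr (\matrix_(i < 4, j < 4) c i j) = M by apply/matrixP => i j; rewrite !mxE.
by rewrite -dL /L det4.
Qed.

Lemma rat_sq_int (r : rat) (z : int) : 0 <= r -> r ^+ 2 = z%:~R -> exists k : nat, r = k%:R.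
Proof.
move=> r0 hr.
have hd : denq r = 1.
  have cop := coprime_num_den r.
  have e : (numq r) ^+ 2 = z * (denq r) ^+ 2.
    apply: (@intr_inj rat); rewrite !expr2 !intrM -!expr2 -hr.
    by rewrite numqE exprMn.
  have dv : (`|denq r| %| `|numq r| ^ 2)%N.
    by rewrite -abszX e abszM abszX dvdn_mull // expnS dvdn_mulr.
  have : (`|denq r| %| 1)%N.
    by rewrite -(eqP (coprimeXl 2 cop)) dvdn_gcd dv dvdnn.
  rewrite dvdn1 => /eqP h1.
  by rewrite -[denq r]gez0_abs ?h1 // ltW // denq_gt0.
have: 0 <= numq r by rewrite numq_ge0.
rewrite -{2}(divq_num_den r) hd divr1.
case: (numq r) => // k _; exists k; done.
Qed.

Lemma nrd_nat (a b : int) (O : quat a b -> Prop) x :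
  a < 0 -> b < 0 -> is_order O -> O x -> exists k : nat, nrd x = k%:R.
Proof.
move=> ha hb oO Ox; have [z hz] := nrd_sq_int oO Ox.
exact: rat_sq_int (nrd_ge0 x ha hb) hz.
Qed.

Lemma order_mul (a b : int) (O : quat a b -> Prop) x y :
  is_order O -> O x -> O y -> O (x * y).
Proof. by case=> e [_ _ _ h]; apply: h. Qed.

Lemma order_1 (a b : int) (O : quat a b -> Prop) : is_order O -> O 1.
Proof. by case=> e [_ _ h _]. Qed.

Lemma unit_nrd (a b : int) (O : quat a b -> Prop) u :
  a < 0 -> b < 0 -> is_order O -> unitO O u -> nrd u = 1.
Proof.
move=> ha hb oO [Ou [v [Ov uv _]]].
have [k hk] := nrd_nat ha hb oO Ou; have [l hl] := nrd_nat ha hb oO Ov.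
have : nrd (u * v) = 1 by rewrite uv nrd1.
rewrite nrdM hk hl -natrM => /eqP; rewrite pnatr_eq1 muln_eq1 => /andP[/eqP -> _].
by [].
Qed.

Lemma unitOM (a b : int) (O : quat a b -> Prop) u v :
  is_order O -> unitO O u -> unitO O v -> unitO O (u * v).
Proof.
move=> oO [Ou [u' [Ou' uu' u'u]]] [Ov [v' [Ov' vv' v'v]]].
split; first exact: order_mul.
exists (v' * u'); split; first exact: order_mul.
  by rewrite mulrA -(mulrA u) vv' mulr1.
by rewrite mulrA -(mulrA v') u'u mulr1.
Qed.

Lemma unitO1 (a b : int) (O : quat a b -> Prop) : is_order O -> unitO O 1.
Proof. move=> oO; split; first exact: order_1. by exists 1; rewrite mulr1; split=> //; exact: order_1. Qed.

Lemma rev_ident (a b : int) (x y v w : quat a b) r :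
  r != 0 -> nrd x = r -> nrd y = r ->
  x * qconj w + v * qconj y = 0 -> qconj x * v + qconj w * y = 0.
Proof.
move=> r0 hx hy h.
have := congr1 (fun t => qc a b r^-1 * (qconj x * t * y)) h.
rewrite /= mulr0 mul0r mulr0 mulrDr mulrDl.
have -> : qconj x * (x * qconj w) * y = qc a b r * (qconj w * y).
  by rewrite (mulrA (qconj x)) qconj_mul hx -mulrA.
have -> : qconj x * (v * qconj y) * y = qc a b r * (qconj x * v).
  by rewrite -mulrA -(mulrA v) qconj_mul hy mulrA qcC.
by rewrite -mulrDr mulrA qcV // mul1r addrC.
Qed.

Lemma scalar_comm (a b : int) (h : 'M[quat a b]_2) r :
  h *m (qc a b r)%:M = (qc a b r)%:M *m h.
Proof.
rewrite [h]mx2E !scalar_mx2 !mx2_mul.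
by rewrite !mulr0 !mul0r !addr0 !add0r !(qcC r).
Qed.

Lemma G_entries (a b : int) n (g : 'M[quat a b]_2) al be ga de :
  g = mx2 al be ga de -> GU2n n g -> invertible2 g ->
  [/\ nrd al + nrd be = n%:R, nrd ga + nrd de = n%:R,
      al * qconj ga + be * qconj de = 0,
      nrd al + nrd ga = n%:R & nrd be + nrd de = n%:R].
Proof.
move=> eg GU [h [gh hg]].
have cg : conjT g *m g = (qc a b n%:R)%:M.
  have -> : conjT g = h *m (qc a b n%:R)%:M by rewrite -GU mulmxA hg mul1mx.
  by rewrite scalar_comm -mulmxA hg mulmx1.
move: GU cg; rewrite /GU2n eg conjT_mx2 !mx2_mul scalar_mx2.
case/mx2_inj => e1 e2 _ e4; case/mx2_inj => f1 _ _ f4.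
move: e1 e4 f1 f4; rewrite !mul_qconj !qconj_mul -!qcD.
by move=> /qc_inj -> /qc_inj -> /qc_inj -> /qc_inj ->.
Qed.

Lemma normalize (a b : int) (O : quat a b -> Prop) xs n k al be ga de :
  a < 0 -> b < 0 -> is_order O -> (forall k, reps_of O (Xk O k) (xs k)) ->
  O al -> O be -> O ga -> O de ->
  nrd al = k%:R -> nrd de = k%:R -> nrd be = (n - k)%:R -> nrd ga = (n - k)%:R ->
  al * qconj ga + be * qconj de = 0 ->
  exists s u1 u2, [/\ Rk O xs n k s, unitO O u1, unitO O u2 &
                      mx2 al be ga de = s *m mx2 u1 0 0 u2].
Proof.
move=> ha hb oO reps Oal Obe Oga Ode hal hde hbe hga hid.
have [_ hrep _] := reps k.
have [i [u1 [hi U1 ea]]] := hrep al (conj Oal hal).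
have [j [u2 [hj U2 ed]]] := hrep de (conj Ode hde).
have U1' := U1; have U2' := U2.
case: U1' => Ou1 [v1 [Ov1 u1v1 v1u1]]; case: U2' => Ou2 [v2 [Ov2 u2v2 v2u2]].
have V1 : unitO O v1 by split=> //; exists u1.
have V2 : unitO O v2 by split=> //; exists u2.
have xi : xr xs k i = al * v1 by rewrite ea -mulrA u1v1 mulr1.
have xj : xr xs k j = de * v2 by rewrite ed -mulrA u2v2 mulr1.
exists (mx2 (xr xs k i) (be * v2) (ga * v1) (xr xs k j)), u1, u2; split => //.
  exists i, j, (be * v2), (ga * v1); split => //.
  - split; first exact: order_mul.
    by rewrite nrdM hbe (unit_nrd ha hb oO V2) mulr1.
  - split; first exact: order_mul.
    by rewrite nrdM hga (unit_nrd ha hb oO V1) mulr1.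
  - rewrite xi xj !qconjM.
    rewrite -(mulrA al) (mulrA v1) mul_qconj (unit_nrd ha hb oO V1) qc1 mul1r.
    by rewrite -(mulrA be) (mulrA v2) mul_qconj (unit_nrd ha hb oO V2) qc1 mul1r.
rewrite mx2_mul !mulr0 !addr0 !add0r -ea -ed -!mulrA v2u2 v1u1 !mulr1.
done.
Qed.

Lemma qconj_ident (a b : int) (x y v w : quat a b) :
  x * qconj w + v * qconj y = 0 -> w * qconj x + y * qconj v = 0.
Proof.
move=> h; have := congr1 (@qconj a b) h.
by rewrite qconjD !qconjM !qconjK qconj0 addrC.
Qed.

Lemma mx2_unitary (a b : int) (x y v w : quat a b) (n k : nat) :
  (0 < k)%N -> (k <= n)%N -> nrd x = k%:R -> nrd y = k%:R ->
  nrd v = (n - k)%:R -> nrd w = (n - k)%:R ->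
  x * qconj w + v * qconj y = 0 ->
  mx2 x v w y *m conjT (mx2 x v w y) = (qc a b n%:R)%:M /\
  conjT (mx2 x v w y) *m mx2 x v w y = (qc a b n%:R)%:M.
Proof.
move=> k0 kn hx hy hv hw hid.
have kn' : (k%:R + (n - k)%:R : rat) = n%:R by rewrite -natrD subnKC.
have k0' : (k%:R : rat) != 0 by rewrite pnatr_eq0 -lt0n.
have r1 := rev_ident k0' hx hy hid.
rewrite conjT_mx2 !mx2_mul scalar_mx2 !mul_qconj !qconj_mul hx hy hv hw -!qcD.
have r2 : qconj v * x + qconj y * w = 0.
  by have := congr1 (@qconj a b) r1; rewrite qconjD !qconjM !qconjK qconj0.
by rewrite [((n - k)%:R + _)]addrC !kn' hid (qconj_ident hid) r1 r2.
Qed.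

Lemma Rk_in_G (a b : int) (O : quat a b -> Prop) xs n k s :
  (forall k, reps_of O (Xk O k) (xs k)) ->
  (0 < k)%N -> (k <= n)%N -> Rk O xs n k s -> M2O_units O s /\ GU2n n s.
Proof.
move=> reps k0 kn [i [j [v [w [[hi hj] [Ov hv] [Ow hw] hid ->]]]]].
have [hx _ _] := reps k; case: (hx i hi) => Oxi nxi; case: (hx j hj) => Oxj nxj.
have [U1 U2] := mx2_unitary k0 kn nxi nxj hv hw hid.
split; last exact U1.
have n0 : (n%:R : rat) != 0 by rewrite pnatr_eq0 -lt0n (leq_trans k0 kn).
split.
  by move=> p q; rewrite mxE; case: p q => [[|[|//]] ?] [[|[|//]] ?] /=.
exists (conjT (mx2 (xr xs k i) v w (xr xs k j)) *m (qc a b n%:R^-1)%:M); split.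
  by rewrite mulmxA U1 -scalar_mxM qcM mulfV.
by rewrite scalar_comm -mulmxA U2 -scalar_mxM qcM mulVf.
Qed.

Lemma pairing (a b : int) (O : quat a b -> Prop) xs n (i j s t : nat)
    (v w u1 u2 : quat a b) (r' ga : 'M[quat a b]_2) :
  is_order O -> (forall k, reps_of O (Xk O k) (xs k)) ->
  (0 < n)%N -> ~~ odd n ->
  Xk O (n - n./2) v -> Xk O (n - n./2) w ->
  (s < size (xs n./2))%N -> (t < size (xs n./2))%N ->
  unitO O u1 -> unitO O u2 ->
  v = xr xs n./2 s * u1 -> w = xr xs n./2 t * u2 ->
  Rk O xs n n./2 r' -> Gamma1_antidiag O ga ->
  r' = mx2 (xr xs n./2 i) v w (xr xs n./2 j) *m ga ->
  r' = mx2 (xr xs n./2 s)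
           (xr xs n./2 i * qconj w * xr xs n./2 t * qc a b (n./2)%:R^-1)
           (xr xs n./2 j * qconj v * xr xs n./2 s * qc a b (n./2)%:R^-1)
           (xr xs n./2 t).
Proof.
move=> oO reps n0 ev [Ov hv] [Ow hw] hs ht U1 U2 ev' ew'.
move=> [s' [t' [v' [w' [[hs' ht'] _ _ _ er]]]]] [al [be [Ual Ube ->]]] hr.
have hn : (n - n./2 = n./2)%N.
  by move: (odd_double_half n); rewrite (negPf ev) add0n -addnn => {1}<-; rewrite addnK.
have m0 : ((n./2)%:R : rat) != 0.
  rewrite pnatr_eq0; apply/negP => /eqP h; move: (odd_double_half n).
  by rewrite (negPf ev) h /= => h'; rewrite -h' in n0.
rewrite hn in hv hw.
move: hr; rewrite mx2_mul !mulr0 !addr0 !add0r => hr.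
have e := hr; rewrite er in e; case/mx2_inj: e => e1 _ _ e4.
have [_ _ huniq] := reps n./2.
have ss : s' = s.
  apply: (huniq _ _ (u1 * be)) => //; first exact: unitOM.
  by rewrite [nth _ _ s']e1 ev' mulrA.
have tt : t' = t.
  apply: (huniq _ _ (u2 * al)) => //; first exact: unitOM.
  by rewrite [nth _ _ t']e4 ew' mulrA.
subst s' t'.
have vbe : v * be = xr xs n./2 s by rewrite e1.
have wal : w * al = xr xs n./2 t by rewrite e4.
have hal : al = qconj w * xr xs n./2 t * qc a b (n./2)%:R^-1.
  by rewrite -wal mulrA qconj_mul hw -qcC mulrA qcM mulVf // qc1 mul1r.
have hbe : be = qconj v * xr xs n./2 s * qc a b (n./2)%:R^-1.
  by rewrite -vbe mulrA qconj_mul hv -qcC mulrA qcM mulVf // qc1 mul1r.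
rewrite hr vbe wal; congr mx2.
  by rewrite hal !mulrA.
by rewrite hbe !mulrA.
Qed.
Unset Implicit Arguments.
Theorem corollary5p14
  (p : nat) (a b : int) (O : quat a b -> Prop) (n : nat)
  (xs : nat -> seq (quat a b)) (Rm' : 'M[quat a b]_2 -> Prop) :
  prime p ->
  ramified_exactly_at_p_infty a b p ->
  is_maximal_order O ->
  (0 < n)%N ->
  (forall k, reps_of O (Xk O k) (xs k)) ->
  (~~ odd n ->
     [/\ (forall g, Rm' g -> Rk O xs n n./2 g),
         (forall g, Rk O xs n n./2 g ->
            exists g', Rm' g' /\
              (g' = g \/ exists ga, Gamma1_antidiag O ga /\ g' = g *m ga)) &
         (forall g g' ga, Rm' g -> Rm' g' -> Gamma1_antidiag O ga ->
            g' = g *m ga -> g = g')]) ->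
  coset_reps (fun g => M2O_units O g /\ GU2n n g) (Gamma1 O)
    (fun g => (exists k, (n./2 < k <= n)%N /\ Rk O xs n k g)
              \/ (~~ odd n /\ Rm' g))
  /\
  (~~ odd n -> forall (i j s t : nat) (v w u1 u2 : quat a b)
                      (r' ga : 'M[quat a b]_2),
     (i < size (xs n./2))%N -> (j < size (xs n./2))%N ->
     Xk O (n - n./2) v -> Xk O (n - n./2) w ->
     xr xs n./2 i * qconj w + v * qconj (xr xs n./2 j) = 0 ->
     (s < size (xs n./2))%N -> (t < size (xs n./2))%N ->
     unitO O u1 -> unitO O u2 ->
     v = xr xs n./2 s * u1 -> w = xr xs n./2 t * u2 ->
     Rk O xs n n./2 r' -> Gamma1_antidiag O ga ->
     r' = mx2 (xr xs n./2 i) v w (xr xs n./2 j) *m ga ->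
     r' = mx2 (xr xs n./2 s)
              (xr xs n./2 i * qconj w * xr xs n./2 t * qc a b (n./2)%:R^-1)
              (xr xs n./2 j * qconj v * xr xs n./2 s * qc a b (n./2)%:R^-1)
              (xr xs n./2 t)).
Proof.
move=> pp [ha hb _] [oO _] n0 reps hRm.
have hn := odd_double_half n; rewrite -addnn in hn.
have ob : (odd n <= 1)%N by case: (odd n).
have Sinfo : forall s, ((exists k, (n./2 < k <= n)%N /\ Rk O xs n k s) \/ (~~ odd n /\ Rm' s)) ->
   exists k, [/\ (0 < k)%N, (k <= n)%N, Rk O xs n k s &
               (n./2 < k)%N \/ [/\ ~~ odd n, Rm' s & k = n./2]].
  move=> s [[k [/andP [k1 k2] hk]] | [ev hs]].
    by exists k; split => //; [lia | left].
  exists n./2; have [h1 _ _] := hRm ev; split.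
  - by move: hn; rewrite (negPf ev) /=; lia.
  - lia.
  - exact: h1.
  - by right.
split; last first.
  move=> ev i j s t v w u1 u2 r' ga hi hj hv hw hid hs ht U1 U2 ev' ew' hr' hga er.
  exact: (pairing oO reps n0 ev hv hw hs ht U1 U2 ev' ew' hr' hga er).
split.
- by move=> s /Sinfo [k [k0 kn hk _]]; exact: (Rk_in_G reps k0 kn hk).
- move=> g [[Og inv] GU].
  have eg := mx2E g.
  have [e1 e2 hid e3 e4] := G_entries eg GU inv.
  have [k hk] := nrd_nat ha hb oO (Og 0 0).
  have [l hl] := nrd_nat ha hb oO (Og 0 1).
  have hkl : (k + l)%N = n.
    by apply/eqP; rewrite -(eqr_nat rat) natrD -hk -hl e1.
  have kn : (k <= n)%N by rewrite -hkl leq_addr.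
  have hbe : nrd (g 0 1) = (n - k)%:R by rewrite hl -hkl addKn.
  have hga : nrd (g 1 0) = (n - k)%:R.
    by rewrite natrB // -e3 hk addrAC subrr add0r.
  have hde : nrd (g 1 1) = k%:R.
    by apply: (addrI (nrd (g 1 0))); rewrite e2 hga -natrD subnK.
  have [hk1 | hk1] := ltnP n./2 k.
    have [s [u1 [u2 [hs U1 U2 es]]]] :=
      normalize ha hb oO reps (Og 0 0) (Og 0 1) (Og 1 0) (Og 1 1) hk hde hbe hga hid.
    exists s, (mx2 u1 0 0 u2); split.
    + by left; exists k; split => //; apply/andP; split.
    + by left; exists u1, u2; split.
    + by rewrite eg es.
  have [hk2 | hk2] := ltnP n./2 (n - k).
    have hk' : nrd (g 0 0) = (n - (n - k))%:R by rewrite subKn.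
    have hde' : nrd (g 1 1) = (n - (n - k))%:R by rewrite subKn.
    have hid' : g 0 1 * qconj (g 1 1) + g 0 0 * qconj (g 1 0) = 0 by rewrite addrC.
    have [s [u1 [u2 [hs U1 U2 es]]]] :=
      normalize ha hb oO reps (Og 0 1) (Og 0 0) (Og 1 1) (Og 1 0) hbe hga hk' hde' hid'.
    exists s, (mx2 0 u1 u2 0); split.
    + by left; exists (n - k)%N; split => //; apply/andP; split => //; exact: leq_subr.
    + by right; exists u1, u2; split.
    + have -> : mx2 0 u1 u2 0 = mx2 u1 0 0 u2 *m mx2 0 1 1 0.
        by rewrite mx2_mul !mulr0 !mulr1 !addr0 !add0r.
      rewrite mulmxA -es eg mx2_mul !mulr0 !mulr1 !addr0 !add0r.
      by rewrite -!mx2E.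
  have ev : ~~ odd n.
    by move: hn hk1 hk2 kn ob; case: (odd n) => //=; lia.
  have km : k = n./2 by move: hn hk1 hk2 kn; rewrite (negPf ev) /=; lia.
  rewrite km in hk hde hbe hga.
  have [s [u1 [u2 [hs U1 U2 es]]]] :=
    normalize ha hb oO reps (Og 0 0) (Og 0 1) (Og 1 0) (Og 1 1) hk hde hbe hga hid.
  have [_ h2 _] := hRm ev.
  have [g' [hg' [eq | [ga0 [[al0 [be0 [Ual Ube ega]]] eq]]]]] := h2 s hs.
    exists g', (mx2 u1 0 0 u2); split.
    + by right; split.
    + by left; exists u1, u2; split.
    + by rewrite eg es eq.
  have Ual' := Ual; have Ube' := Ube.
  case: Ual' => Oal0 [al' [Oal' aa' a'a]]; case: Ube' => Obe0 [be' [Obe' bb' b'b]].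
  exists g', (mx2 0 (be' * u2) (al' * u1) 0); split.
  + by right; split.
  + right; exists (be' * u2), (al' * u1); split => //; apply: unitOM => //.
      by split => //; exists be0.
    by split => //; exists al0.
  + rewrite eg es eq ega -mulmxA; congr (_ *m _).
    by rewrite mx2_mul !mulr0 !mul0r !addr0 !add0r !mulrA aa' bb' !mul1r.
- move=> s s' h /Sinfo [k [k0 kn hk ck]] /Sinfo [k' [k0' kn' hk' ck']] hh e.
  have hk0 := hk.
  case: hk0 => i [j [v [w [[hi hj] [Ov hv] [Ow hw] hid es]]]].
  case: hk' => i' [j' [v' [w' [[hi' hj'] [Ov' hv'] [Ow' hw'] hid' es']]]].
  have [hx _ _] := reps k; have [hx' _ _] := reps k'.
  have nxi := (hx i hi).2; have nxi' := (hx' i' hi').2.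
  case: hh => [[u1 [u2 [U1 U2 eh]]] | hanti].
    have e0 := e.
    rewrite es' es eh mx2_mul !mulr0 !addr0 !add0r in e.
    case/mx2_inj: e => f1 _ _ f4.
    have kk : k' = k.
      have := congr1 (@nrd a b) f1.
      rewrite nrdM (unit_nrd ha hb oO U1) mulr1 nxi nxi' => /eqP.
      by rewrite eqr_nat => /eqP.
    subst k'.
    have [_ _ huniq] := reps k.
    have ii : i' = i := huniq _ _ _ hi' hi U1 f1.
    have jj : j' = j := huniq _ _ _ hj' hj U2 f4.
    subst i' j'.
    have nz : nrd (xr xs k i) != 0 by rewrite nxi pnatr_eq0 -lt0n.
    have nzj : nrd (xr xs k j) != 0 by rewrite (hx j hj).2 pnatr_eq0 -lt0n.
    have u11 : u1 = 1 by apply/esym/(qcaddlcancel nz); rewrite mulr1 -f1.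
    have u21 : u2 = 1 by apply/esym/(qcaddlcancel nzj); rewrite mulr1 -f4.
    by rewrite e0 eh u11 u21 -one_mx2 mulmx1.
  have hanti0 := hanti.
  case: hanti => [al [be [Ual Ube eh]]].
  have e0 := e.
  rewrite es' es eh mx2_mul !mulr0 !addr0 !add0r in e.
  case/mx2_inj: e => f1 _ _ f4.
  have kk : k' = (n - k)%N.
    have := congr1 (@nrd a b) f1.
    rewrite nrdM (unit_nrd ha hb oO Ube) mulr1 hv nxi' => /eqP.
    by rewrite eqr_nat => /eqP.
  case: ck => [c1 | [ev hs kh]]; case: ck' => [c1' | [ev' hs' kh']].
  + exfalso; lia.
  + exfalso; move: hn; rewrite (negPf ev') /=; lia.
  + exfalso; move: hn; rewrite (negPf ev) /=; lia.
  + have [_ _ h3] := hRm ev.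
    exact: (h3 s s' h hs hs' hanti0 e0).
Qed.
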